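(* Let $r\geqslant 2$, $\ell\geqslant 1$ and $m=2^r(2^\ell+1)$. Then: (i) $L_1(x^{m-1})=x^{2^r-1}+\left(1+\sum_{k=r}^{r+\ell-1}x^{2^k}\right)\sum_{k=0}^{r-1}x^{2^k-1}$; (ii) $x^2\,(L_1(x^{m-1}))'=P_r(x)^2+P_\ell(x)^{2^r}P_{r-1}(x)^2$; (iii) if $\tau$ is a root of $(L_1(x^{m-1}))'$ in $\overline{\mathbb F}_2$, then $P_{r-1}(\tau)\neq 0$; (iv) if $\tau_i,\tau_j$ are distinct roots of $(L_1(x^{m-1}))'$ with $P_\ell(\tau_i+\tau_j)=0$, then $P_{r-1}(\tau_i+\tau_j)\neq 0$ and $$P_\ell(\tau_i)^{2^{r-1}}=\frac{P_r(\tau_i)}{P_{r-1}(\tau_i)}=\frac{P_r(\tau_i+\tau_j)}{P_{r-1}(\tau_i+\tau_j)}=\frac{P_r(\tau_j)}{P_{r-1}(\tau_j)}=P_\ell(\tau_j)^{2^{r-1}}.$$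
   Context: Here $P_0=0$ and, for $k\geqslant 1$, $P_k(x)=x+x^2+\dots+x^{2^{k-1}}$ is the $k$-th trace polynomial over $\mathbb F_2$. For $m\equiv 0\pmod 4$, $L_1(x^{m-1})$ denotes the unique polynomial $Q$ of degree at most $(m-2)/2$ over $\mathbb F_2$ with $Q(x(x+1))=(x+1)^{m-1}+x^{m-1}$. *)

(* Defs.v *)
From mathcomp Require Import all_boot all_order all_algebra closed_field.
Set Implicit Arguments. Unset Strict Implicit. Unset Printing Implicit Defensive.
Import GRing.Theory.
Local Open Scope ring_scope.

Definition F2bar_sig := countable_algebraic_closure ('F_2 : countFieldType).
Definition F2bar : closedFieldType := projT1 F2bar_sig.
Definition F2emb : {rmorphism 'F_2 -> F2bar} := sval (projT2 F2bar_sig).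

Definition Ptr (R : nzRingType) (k : nat) : {poly R} := \sum_(i < k) 'X^(2 ^ i).

(* Q is L_1(x^(m-1)): deg Q <= (m-2)/2 and Q(x(x+1)) = (x+1)^(m-1) + x^(m-1) over F_2. *)
Definition is_L1 (m : nat) (Q : {poly 'F_2}) : Prop :=
  (size Q <= ((m - 2) %/ 2).+1)%N /\
  Q \Po ('X * ('X + 1)) = ('X + 1) ^+ (m - 1) + 'X ^+ (m - 1).

(* Main.v *)
Require Import Defs.
From mathcomp Require Import all_boot all_order all_algebra closed_field.
From mathcomp Require Import ring zify.
Import GRing.Theory.
Local Open Scope ring_scope.

Section Char2.
Variable R : comNzRingType.
Hypothesis c2 : (2 \in [pchar R])%N.

Lemma two0 : (2%:R : R) = 0. Proof. exact: pcharf0 c2. Qed.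

Lemma c2eq (u v w : R) : u - v = 2%:R * w -> u = v.
Proof. by move=> h; apply/eqP; rewrite -subr_eq0 h two0 mul0r. Qed.

Lemma frob (u v : R) n : (u + v) ^+ (2 ^ n) = u ^+ (2 ^ n) + v ^+ (2 ^ n).
Proof.
elim: n => [|n IH]; first by rewrite expn0 !expr1.
by rewrite expnSr !exprM IH sqrrD (mulrn_pchar c2) addr0.
Qed.

Lemma frob_sum k n (F : nat -> R) :
  (\sum_(i < k) F i) ^+ (2 ^ n) = \sum_(i < k) F i ^+ (2 ^ n).
Proof.
elim: k => [|k IH]; first by rewrite !big_ord0 expr0n expn_eq0.
by rewrite !big_ord_recr /= frob IH.
Qed.

Lemma tele (x : R) n : \sum_(i < n) (x * (x + 1)) ^+ (2 ^ i) = x ^+ (2 ^ n) + x.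
Proof.
elim: n => [|n IH]; first by rewrite big_ord0 expn0 expr1 (addrr_pchar2 c2).
rewrite big_ord_recr /= IH exprMn frob expr1n expnSr exprM.
apply: (@c2eq _ _ (x ^+ (2^n))). ring.
Qed.

Lemma Ptr_add k (a b : R) : (Ptr R k).[a + b] = (Ptr R k).[a] + (Ptr R k).[b].
Proof.
rewrite /Ptr !horner_sum -big_split /=; apply: eq_bigr => i _.
by rewrite !hornerXn frob.
Qed.

Lemma Ptr_rec k (t : R) : (Ptr R k.+1).[t] = (Ptr R k).[t] + t ^+ (2 ^ k).
Proof. by rewrite /Ptr big_ord_recr /= hornerD hornerXn. Qed.

Lemma natr_odd n : (n%:R : R) = (odd n)%:R.
Proof.
by rewrite -(GRing.natr_mod_pchar c2) modn2.
Qed.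
End Char2.

Definition Q0 (r l : nat) : {poly 'F_2} :=
  'X^(2 ^ r - 1)
  + (1 + \sum_(r <= k < r + l) 'X^(2 ^ k)) * \sum_(k < r) 'X^(2 ^ k - 1).

Lemma c2P : (2 \in [pchar {poly 'F_2}])%N.
Proof. by rewrite pchar_poly; apply: pchar_Fp. Qed.

Lemma compXn (p : {poly 'F_2}) n : 'X^n \Po p = p ^+ n.
Proof. by rewrite rmorphXn /= comp_polyX. Qed.

Lemma comp_Q0 r l :
  Q0 r l \Po ('X * ('X + 1)) =
  ('X + 1) ^+ (2 ^ r * (2 ^ l + 1) - 1) + 'X ^+ (2 ^ r * (2 ^ l + 1) - 1).
Proof.
set x : {poly 'F_2} := 'X; set y := x * (x + 1).
set m := (2 ^ r * (2 ^ l + 1))%N.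
have m0 : (0 < m)%N by rewrite muln_gt0 expn_gt0 addn1.
have sx1 : size (x + 1) = 2%N by rewrite -polyC1 size_XaddC.
have yn0 : y != 0.
  by rewrite mulf_neq0 // -size_poly_eq0 ?sx1 // /x size_polyX.
rewrite /Q0 rmorphD rmorphM rmorphD rmorph1 !rmorph_sum /= compXn.
under eq_bigr => k _ do rewrite compXn.
under [X in _ * X]eq_bigr => k _ do rewrite compXn.
apply: (mulfI yn0).
have hS : \sum_(r <= k < r + l) y ^+ (2 ^ k) = x ^+ (2 ^ (r + l)) + x ^+ (2 ^ r).
  rewrite -[LHS](addKr (\sum_(k < r) y ^+ (2 ^ k))).
  rewrite -(big_mkord (fun _ => true) (fun k => y ^+ (2 ^ k))).
  rewrite -big_cat_nat ?leq_addr //= !big_mkord /y !tele ?c2P //.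
  apply: (@c2eq _ c2P _ _ (- x ^+ (2 ^ r))); ring.
have hT : y * \sum_(k < r) y ^+ (2 ^ k - 1) = x ^+ (2 ^ r) + x.
  rewrite mulr_sumr -(@tele _ c2P x r); apply: eq_bigr => k _.
  by rewrite -exprS subn1 prednK ?expn_gt0.
have hY : y * y ^+ (2 ^ r - 1) = x ^+ (2 ^ r) * (x ^+ (2 ^ r) + 1).
  by rewrite -exprS subn1 prednK ?expn_gt0 // exprMn frob ?c2P // expr1n.
have hR1 : y * (x + 1) ^+ (m - 1) = x * (x + 1) ^+ m.
  by rewrite /y -mulrA -exprS subn1 prednK.
have hR2 : y * x ^+ (m - 1) = (x + 1) * x ^+ m.
  by rewrite /y mulrAC -exprS subn1 prednK // mulrC.
rewrite mulrDr hY mulrCA hT hS [RHS]mulrDr hR1 hR2.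
rewrite /m !exprM frob ?c2P // expr1n expnD exprM !exprD !expr1 frob ?c2P // expr1n.
set a := x ^+ (2 ^ r); set b := a ^+ (2 ^ l).
apply: (@c2eq _ c2P _ _ (a ^+ 2 + a - x * a * b)); ring.
Qed.

Definition Sr (r l : nat) : {poly 'F_2} := \sum_(r <= k < r + l) 'X^(2 ^ k).

Lemma odd2m1 k : (0 < k)%N -> odd (2 ^ k - 1).
Proof. by move=> hk; rewrite oddB ?expn_gt0 // oddX; case: k hk. Qed.

Lemma deriv_Q0 r l : (2 <= r)%N ->
  (Q0 r l)^`() = 'X^(2 ^ r - 2) + (1 + Sr r l) * \sum_(i < r.-1) 'X^(2 ^ i.+1 - 2).
Proof.
case: r => // r hr /=.
rewrite /Q0 -/(Sr r.+1 l) derivD derivM derivD.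
have -> : (Sr r.+1 l)^`() = 0.
  rewrite /Sr raddf_sum /= big_nat_cond big1 // => k /andP[/andP[hk _] _].
  rewrite derivXn -mulr_natr (@natr_odd _ c2P) oddX.
  by case: k hk => [|k] //= _; rewrite mulr0.
have -> : (1 : {poly 'F_2})^`() = 0 by rewrite -polyC1 derivC.
rewrite derivXn -mulr_natr (@natr_odd _ c2P) odd2m1 // mulr1 add0r mul0r add0r.
have -> : ((2 ^ r.+1 - 1).-1 = 2 ^ r.+1 - 2)%N by lia.
congr (_ + _ * _).
rewrite raddf_sum big_ord_recl /= derivXn subnn mulr0n add0r.
apply: eq_bigr => i _.
rewrite derivXn -mulr_natr (@natr_odd _ c2P) odd2m1 // mulr1.
by have -> : ((2 ^ i.+1 - 1).-1 = 2 ^ i.+1 - 2)%N by lia.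
Qed.

Lemma Ptr_pow k n : Ptr 'F_2 k ^+ (2 ^ n) = \sum_(i < k) 'X^(2 ^ (i + n)).
Proof.
rewrite /Ptr (@frob_sum _ c2P k n (fun i => 'X^(2 ^ i))); apply: eq_bigr => i _.
by rewrite -exprM -expnD.
Qed.

Lemma part_ii r l : (2 <= r)%N ->
  'X ^+ 2 * (Q0 r l)^`() = Ptr _ r ^+ 2 + Ptr _ l ^+ (2 ^ r) * Ptr _ (r - 1) ^+ 2.
Proof.
move=> hr; rewrite deriv_Q0 //.
have E2 : forall p : {poly 'F_2}, p ^+ 2 = p ^+ (2 ^ 1) by [].
rewrite [Ptr _ r ^+ 2]E2 [Ptr _ (r - 1) ^+ 2]E2 !Ptr_pow.
have -> : Sr r l = \sum_(i < l) 'X^(2 ^ (i + r)).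
  by rewrite /Sr -{1}[r]add0n big_addn addKn big_mkord.
case: r hr => // r hr /=; rewrite subn1 /=.
rewrite big_ord_recr /= mulrDr -exprD subnKC; last first.
  by rewrite expnS; have := expn_gt0 2 r; lia.
have hT : 'X^2 * \sum_(i < r) 'X^(2 ^ i.+1 - 2) = \sum_(i < r) ('X^(2 ^ (i + 1)) : {poly 'F_2}).
  rewrite mulr_sumr; apply: eq_bigr => i _; rewrite -exprD subnKC ?addn1 //.
  by rewrite expnS; have := expn_gt0 2 i; lia.
rewrite mulrCA hT addn1; ring.
Qed.

Lemma Q0d0 r l : (2 <= r)%N -> (Q0 r l)^`().[0] = 1.
Proof.
case: r => [|[|r]] // _; rewrite deriv_Q0 //=.
rewrite hornerD hornerM hornerD hornerC /Sr !horner_sum hornerXn expr0n.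
have -> : (2 ^ r.+2 - 2 == 0)%N = false.
  by apply/negbTE; rewrite expnS expnS; have := expn_gt0 2 r; lia.
rewrite add0r big_ord_recl /= hornerXn (_ : (2 ^ 1 - 2)%N = 0%N) // expr0.
rewrite big1 ?addr0; last first.
  by move=> i _; rewrite hornerXn expr0n; case: eqP => [/eqP|//]; rewrite expn_eq0.
rewrite big1 ?addr0 ?mul1r //.
move=> i _; rewrite hornerXn expr0n; case: eqP => [|//].
rewrite /bump /= !expnS; have := expn_gt0 2 i; lia.
Qed.

Lemma c2b : (2 \in [pchar F2bar])%N.
Proof. by apply: (rmorph_pchar F2emb); apply: pchar_Fp. Qed.

Lemma map_Ptr k : map_poly F2emb (Ptr 'F_2 k) = Ptr F2bar k.
Proof. by rewrite /Ptr rmorph_sum; apply: eq_bigr => i _; rewrite rmorphXn /= map_polyX. Qed.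

Lemma Ptr_recB (R : comNzRingType) k (t : R) : (0 < k)%N ->
  (Ptr R k).[t] = (Ptr R (k - 1)).[t] + t ^+ (2 ^ (k - 1)).
Proof. by case: k => // k _; rewrite subn1 /= Ptr_rec. Qed.

Lemma eval_ii r l t : (2 <= r)%N ->
  t ^+ 2 * (map_poly F2emb (Q0 r l)^`()).[t] =
  (Ptr F2bar r).[t] ^+ 2 + (Ptr F2bar l).[t] ^+ (2 ^ r) * (Ptr F2bar (r - 1)).[t] ^+ 2.
Proof.
move=> hr.
have eL : map_poly F2emb ('X^2 * (Q0 r l)^`()) = 'X^2 * map_poly F2emb (Q0 r l)^`().
  by rewrite rmorphM rmorphXn /= map_polyX.
have eR : map_poly F2emb (Ptr _ r ^+ 2 + Ptr _ l ^+ (2^r) * Ptr _ (r-1) ^+ 2)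
    = Ptr F2bar r ^+ 2 + Ptr F2bar l ^+ (2^r) * Ptr F2bar (r-1) ^+ 2.
  by rewrite rmorphD (rmorphM _ (Ptr _ l ^+ (2 ^ r))) !rmorphXn /= !map_Ptr.
have := congr1 (map_poly F2emb) (@part_ii r l hr).
rewrite eL eR => /(congr1 (horner^~ t)) /=.
by rewrite !hornerE.
Qed.

Lemma part_iii r l tau : (2 <= r)%N ->
  root (map_poly F2emb (Q0 r l)^`()) tau -> (Ptr F2bar (r - 1)).[tau] != 0.
Proof.
move=> hr /eqP ht; apply/eqP => hp.
have := @eval_ii r l tau hr; rewrite ht hp mulr0 expr0n /= mulr0 addr0.
move/esym/eqP; rewrite expf_eq0 /= (@Ptr_recB _ r tau (ltnW hr)) hp add0r expf_eq0.
rewrite expn_gt0 /= => /eqP t0.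
move: ht; rewrite t0 -(rmorph0 F2emb) horner_map Q0d0 // rmorph1 => /eqP.
by rewrite rmorph0 oner_eq0.
Qed.

Lemma rel_root r l t : (2 <= r)%N ->
  root (map_poly F2emb (Q0 r l)^`()) t ->
  (Ptr F2bar r).[t] = (Ptr F2bar l).[t] ^+ (2 ^ (r - 1)) * (Ptr F2bar (r - 1)).[t].
Proof.
move=> hr /eqP ht; have := @eval_ii r l t hr; rewrite ht mulr0.
have -> : (2 ^ r = 2 ^ (r - 1) * 2 ^ 1)%N by rewrite -expnD subnK // ltnW.
rewrite exprM -exprMn.
have E2 : forall u : F2bar, u ^+ 2 = u ^+ (2 ^ 1) by [].
rewrite !E2 -(@frob _ c2b) => /esym/eqP; rewrite expf_eq0 /= addr_eq0 => /eqP ->.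
by rewrite (@oppr_pchar2 _ c2b).
Qed.

Lemma part_iv r l ti tj : (2 <= r)%N ->
  root (map_poly F2emb (Q0 r l)^`()) ti -> root (map_poly F2emb (Q0 r l)^`()) tj ->
  ti != tj -> (Ptr F2bar l).[ti + tj] = 0 ->
        (Ptr F2bar (r - 1)).[ti + tj] != 0 /\
        [/\ (Ptr F2bar l).[ti] ^+ (2 ^ (r - 1))
              = (Ptr F2bar r).[ti] / (Ptr F2bar (r - 1)).[ti],
            (Ptr F2bar r).[ti] / (Ptr F2bar (r - 1)).[ti]
              = (Ptr F2bar r).[ti + tj] / (Ptr F2bar (r - 1)).[ti + tj],
            (Ptr F2bar r).[ti + tj] / (Ptr F2bar (r - 1)).[ti + tj]
              = (Ptr F2bar r).[tj] / (Ptr F2bar (r - 1)).[tj]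
          & (Ptr F2bar r).[tj] / (Ptr F2bar (r - 1)).[tj]
              = (Ptr F2bar l).[tj] ^+ (2 ^ (r - 1))].
Proof.
move=> hr hi hj hne hs.
set c := (Ptr F2bar l).[ti] ^+ (2 ^ (r - 1)).
have hl : (Ptr F2bar l).[tj] = (Ptr F2bar l).[ti].
  move: hs; rewrite (@Ptr_add _ c2b) => /eqP; rewrite addr_eq0 => /eqP ->.
  by rewrite (@oppr_pchar2 _ c2b).
have ri := @rel_root r l ti hr hi; have rj := @rel_root r l tj hr hj.
rewrite hl -/c in rj; rewrite -/c in ri.
have ni := @part_iii r l ti hr hi; have nj := @part_iii r l tj hr hj.
have rs : (Ptr F2bar r).[ti + tj] = c * (Ptr F2bar (r - 1)).[ti + tj].
  by rewrite !(@Ptr_add _ c2b) ri rj mulrDr.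
have ns : (Ptr F2bar (r - 1)).[ti + tj] != 0.
  apply/eqP => h0; move: rs; rewrite h0 mulr0 (@Ptr_recB _ r _ (ltnW hr)) h0 add0r.
  move/eqP; rewrite expf_eq0 expn_gt0 /= addr_eq0 (@oppr_pchar2 _ c2b).
  by rewrite (negbTE hne).
have di : (Ptr F2bar r).[ti] / (Ptr F2bar (r - 1)).[ti] = c by rewrite ri mulfK.
have dj : (Ptr F2bar r).[tj] / (Ptr F2bar (r - 1)).[tj] = c by rewrite rj mulfK.
have ds : (Ptr F2bar r).[ti + tj] / (Ptr F2bar (r - 1)).[ti + tj] = c
  by rewrite rs mulfK.
by split => //; split; rewrite ?di ?ds ?dj ?hl.
Qed.

Theorem lemma3p3 (r l : nat) (hr : (2 <= r)%N) (hl : (1 <= l)%N) :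
  let m := (2 ^ r * (2 ^ l + 1))%N in
  (exists Q, is_L1 m Q) /\
  forall Q : {poly 'F_2}, is_L1 m Q ->
  [/\ (* (i) *)
      Q = 'X^(2 ^ r - 1)
          + (1 + \sum_(r <= k < r + l) 'X^(2 ^ k)) * \sum_(k < r) 'X^(2 ^ k - 1),
      (* (ii) *)
      'X ^+ 2 * Q^`() = Ptr _ r ^+ 2 + Ptr _ l ^+ (2 ^ r) * Ptr _ (r - 1) ^+ 2,
      (* (iii) *)
      forall tau : F2bar, root (map_poly F2emb Q^`()) tau ->
        (Ptr F2bar (r - 1)).[tau] != 0
    & (* (iv) *)
      forall ti tj : F2bar,
        root (map_poly F2emb Q^`()) ti -> root (map_poly F2emb Q^`()) tj ->
        ti != tj -> (Ptr F2bar l).[ti + tj] = 0 ->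
        (Ptr F2bar (r - 1)).[ti + tj] != 0 /\
        [/\ (Ptr F2bar l).[ti] ^+ (2 ^ (r - 1))
              = (Ptr F2bar r).[ti] / (Ptr F2bar (r - 1)).[ti],
            (Ptr F2bar r).[ti] / (Ptr F2bar (r - 1)).[ti]
              = (Ptr F2bar r).[ti + tj] / (Ptr F2bar (r - 1)).[ti + tj],
            (Ptr F2bar r).[ti + tj] / (Ptr F2bar (r - 1)).[ti + tj]
              = (Ptr F2bar r).[tj] / (Ptr F2bar (r - 1)).[tj]
          & (Ptr F2bar r).[tj] / (Ptr F2bar (r - 1)).[tj]
              = (Ptr F2bar l).[tj] ^+ (2 ^ (r - 1))]].
Proof.
move=> m.
have sx1 : size ('X + 1 : {poly 'F_2}) = 2%N by rewrite -polyC1 size_XaddC.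
have sy : size ('X * ('X + 1) : {poly 'F_2}) = 3%N.
  by rewrite size_mul ?sx1 ?size_polyX // -size_poly_eq0 ?sx1 ?size_polyX.
have hcomp := comp_Q0 r l; rewrite -/m in hcomp.
have m0 : (0 < m)%N by rewrite /m muln_gt0 expn_gt0 addn1.
have hm : m = (2 ^ (r - 1) * (2 ^ l + 1) * 2)%N.
  by rewrite /m -mulnA [(_ * 2)%N]mulnC mulnA -expnSr subn1 prednK // ltnW.
clearbody m.
have huniq : forall Q, is_L1 m Q -> Q = Q0 r l.
  move=> Q [_ hQ]; apply/eqP; rewrite -subr_eq0.
  rewrite -(@comp_poly_eq0 _ _ ('X * ('X + 1))) ?sy //.
  by rewrite rmorphB /= hQ hcomp subrr.
split.
  exists (Q0 r l); split; last exact: hcomp.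
  have h := size_comp_poly (Q0 r l) ('X * ('X + 1)).
  rewrite hcomp sy in h.
  have hs : (size ((('X + 1 : {poly 'F_2}) ^+ (m - 1) + 'X ^+ (m - 1))%R) <= m)%N.
    apply: leq_trans (size_polyD _ _) _; rewrite geq_max size_polyXn; apply/andP; split.
    have := size_exp ('X + 1 : {poly 'F_2}) (m - 1); rewrite sx1 /= mul1n.
    move=> h1; clear -h1 m0; move: (size _) h1 => s h1; lia.
    lia.
  move: h hs; move: (size (Q0 r l)) (size _) => s t h hs; clear -h hs hm m0; lia.
move=> Q /huniq ->; split.
- by [].
- exact: part_ii.
- by move=> tau; apply: part_iii.
- by move=> ti tj; apply: part_iv.
Qed.
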